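(* Let $C\subset\mathbb{R}^2$ be the closed disk with center $(a,b)$ and radius $r>0$, and for $i\in\mathbb{N}$ let $C_i$ be the closed disk with center $(ia,ib)$ and radius $ir$. Let $\tau_2$ be the extremal ray of $L_{\mathbb{Q}_{\geq}}(C\cap\mathbb{R}^2_{\geq})$ of smaller slope, and suppose $C\cap\tau_2$ is a single point. For each $i$ with $C_i\cap C_{i+1}\neq\emptyset$, let $P_i$ be the point of $C_i\cap C_{i+1}$ closest to $\tau_2$. Then $\lim_{i\to\infty}\mathrm{d}(P_i,\tau_2)=0$.
   Context: $\mathbb{N}=\{0,1,2,\dots\}$. For $A\subseteq\mathbb{R}^2_{\geq}$, $L_{\mathbb{Q}_{\geq}}(A)=\{\sum_{i=1}^p q_ia_i\mid p\in\mathbb{N},\ q_i\in\mathbb{Q}_{\geq},\ a_i\in A\}$ and its extremal rays are its two boundary half-lines from the origin. $\mathrm{d}(P,\tau_2)$ is the Euclidean distance from the point $P$ to the line $\tau_2$. *)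

(* Defs.v *)
From Stdlib Require Import Reals Lra QArith List.
Open Scope R_scope.

Definition pt : Type := (R * R)%type.

Definition in_disk (c : pt) (rad : R) (p : pt) : Prop :=
  (fst p - fst c) ^ 2 + (snd p - snd c) ^ 2 <= rad ^ 2.

Definition quadrant (p : pt) : Prop := 0 <= fst p /\ 0 <= snd p.

Definition lin_comb (l : list (Q * pt)) : pt :=
  fold_right (fun qa acc =>
    (Q2R (fst qa) * fst (snd qa) + fst acc, Q2R (fst qa) * snd (snd qa) + snd acc))
    (0, 0) l.

Definition cone_Q (A : pt -> Prop) (p : pt) : Prop :=
  exists l : list (Q * pt),
    Forall (fun qa => (0 <= fst qa)%Q /\ A (snd qa)) l /\ p = lin_comb l.

Definition det (u p : pt) : R := fst u * snd p - snd u * fst p.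

Definition ray (u : pt) (p : pt) : Prop :=
  exists t, 0 <= t /\ p = (t * fst u, t * snd u).

(* {t u | t >= 0} is the boundary half-line of the planar cone K of smallest
   angle (= smaller slope): u is a nonzero point of the closure of K, and every
   point of K lies counterclockwise of (or on) the line through u. *)
Definition lower_extremal_ray (K : pt -> Prop) (u : pt) : Prop :=
  u <> (0, 0) /\
  (forall p, K p -> 0 <= det u p) /\
  (forall eps, 0 < eps -> exists p, K p /\
      (fst p - fst u) ^ 2 + (snd p - snd u) ^ 2 < eps ^ 2).

Definition dist_line (u P : pt) : R :=
  Rabs (det u P) / sqrt (fst u ^ 2 + snd u ^ 2).

Definition Ci (a b r : R) (i : nat) : pt -> Prop :=
  in_disk (INR i * a, INR i * b) (INR i * r).

(* Main.v *)
Require Import Defs.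
From Stdlib Require Import Reals QArith List Lra Psatz.
Open Scope R_scope.

Lemma nat_big (M : R) : exists N : nat, forall i, (N <= i)%nat -> M < INR i.
Proof.
  destruct (archimed_cor1 (/ (Rabs M + 1))) as [N [HN HN0]].
  { apply Rinv_0_lt_compat. pose proof (Rabs_pos M). lra. }
  exists N. intros i Hi.
  assert (HNp : 0 < INR N) by (apply lt_0_INR; exact HN0).
  assert (Hle : INR N <= INR i) by (apply le_INR; exact Hi).
  assert (Rabs M + 1 < INR N).
  { assert (Hp : 0 < Rabs M + 1) by (pose proof (Rabs_pos M); lra).
    destruct (Rle_or_lt (INR N) (Rabs M + 1)) as [Hc|Hc]; [|exact Hc].
    exfalso. assert (/ (Rabs M + 1) <= / INR N) by (apply Rinv_le_contravar; lra). lra. }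
  pose proof (Rle_abs M). lra.
Qed.

Lemma key (a b r u1 u2 t : R) (i : nat) :
  0 < r -> 0 < u1^2 + u2^2 ->
  u1 * (t*u1 - a) + u2 * (t*u2 - b) = 0 ->
  (t*u1 - a)^2 + (t*u2 - b)^2 <= r^2 ->
  1 <= INR i ->
  t^2 * (u1^2+u2^2) <= 4 * (INR i)^2 * r^2 ->
  exists q, Ci a b r i q /\ Ci a b r (S i) q /\
    dist_line (u1,u2) q <= t^2 * (u1^2+u2^2) / (4 * INR i * r).
Proof.
  intros Hr HN HD Hv Hi HS.
  set (N := u1^2+u2^2) in *.
  set (x := INR i) in *.
  set (S0 := t^2 * N) in *.
  set (lam := S0 / (4 * x * r^2)).
  set (v1 := a - t*u1). set (v2 := b - t*u2).
  exists ((x + /2) * (t*u1) + lam * v1, (x + /2) * (t*u2) + lam * v2).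
  assert (Hlam0 : 0 <= lam).
  { unfold lam. apply Rmult_le_pos. unfold S0. apply Rmult_le_pos; nra.
    left; apply Rinv_0_lt_compat; nra. }
  assert (Hlam : lam * (4 * x * r^2) = S0).
  { unfold lam. field. split; lra. }
  assert (Hlam2 : lam^2 * r^2 <= S0/4).
  { assert (lam * (4 * x^2 * r^2) >= lam * S0) by (apply Rle_ge, Rmult_le_compat_l; lra).
    assert (lam * S0 = lam * lam * 4 * x * r^2) by (rewrite <- Hlam; ring).
    nra. }
  assert (HD' : u1 * v1 + u2 * v2 = 0) by (unfold v1, v2; lra).
  assert (Hv' : v1^2 + v2^2 <= r^2) by (unfold v1, v2; nra).
  assert (HS0 : S0 = (t*u1)^2 + (t*u2)^2) by (unfold S0, N; ring).
  split; [|split].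
  - unfold Ci, in_disk; cbn [fst snd]. fold x.
    assert (E : ((x + / 2) * (t * u1) + lam * v1 - x * a) ^ 2 +
                ((x + / 2) * (t * u2) + lam * v2 - x * b) ^ 2
              = S0/4 + (lam - x)^2 * (v1^2+v2^2) + (lam - x) * t * (u1*v1+u2*v2)).
    { rewrite HS0. unfold v1, v2. field. }
    rewrite E, HD'.
    assert ((lam - x)^2 * (v1^2+v2^2) <= (lam-x)^2 * r^2) by (apply Rmult_le_compat_l; [apply pow2_ge_0 | exact Hv']).
    assert (lam * x * r^2 * 4 = S0) by (rewrite <- Hlam; ring).
    nra.
  - unfold Ci, in_disk; cbn [fst snd]. rewrite S_INR. fold x.
    assert (E : ((x + / 2) * (t * u1) + lam * v1 - (x+1) * a) ^ 2 +
                ((x + / 2) * (t * u2) + lam * v2 - (x+1) * b) ^ 2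
              = S0/4 + (lam - x - 1)^2 * (v1^2+v2^2) - (lam - x - 1) * t * (u1*v1+u2*v2)).
    { rewrite HS0. unfold v1, v2. field. }
    rewrite E, HD'.
    assert ((lam - x - 1)^2 * (v1^2+v2^2) <= (lam-x-1)^2 * r^2) by (apply Rmult_le_compat_l; [apply pow2_ge_0 | exact Hv']).
    assert (lam * x * r^2 * 4 = S0) by (rewrite <- Hlam; ring).
    nra.
  - unfold dist_line, det; simpl.
    assert (E : u1 * ((x + / 2) * (t * u2) + lam * v2) - u2 * ((x + / 2) * (t * u1) + lam * v1)
                = lam * (u1 * v2 - u2 * v1)) by ring.
    rewrite E. fold N.
    assert (Hsq : 0 < sqrt N) by (apply sqrt_lt_R0; lra).
    assert (Hdet : Rabs (u1 * v2 - u2 * v1) <= r * sqrt N).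
    { assert (L : (u1 * v2 - u2 * v1)^2 = N * (v1^2+v2^2) - (u1*v1+u2*v2)^2) by (unfold N; ring).
      rewrite HD' in L.
      rewrite <- (sqrt_Rsqr (Rabs _)) by apply Rabs_pos.
      rewrite <- (sqrt_Rsqr r) by lra.
      rewrite <- sqrt_mult by (unfold Rsqr; nra).
      apply sqrt_le_1_alt. rewrite <- Rsqr_abs. unfold Rsqr. nra. }
    rewrite Rabs_mult, (Rabs_pos_eq lam Hlam0).
    apply (Rmult_le_reg_r (sqrt N)); [exact Hsq|].
    unfold Rdiv at 1. rewrite Rmult_assoc, Rinv_l, Rmult_1_r by lra.
    assert (lam * Rabs (u1 * v2 - u2 * v1) <= lam * (r * sqrt N)) by (apply Rmult_le_compat_l; lra).
    assert (lam * (r * sqrt N) = S0 / (4 * x * r) * sqrt N).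
    { unfold lam. field. split; lra. }
    lra.
Qed.

Theorem lemma4p1 (a b r : R) (u : pt) (P : nat -> pt) :
  0 < r ->
  lower_extremal_ray (cone_Q (fun p => in_disk (a, b) r p /\ quadrant p)) u ->
  (exists! p, in_disk (a, b) r p /\ ray u p) ->
  (forall i : nat, (exists q, Ci a b r i q /\ Ci a b r (S i) q) ->
     Ci a b r i (P i) /\ Ci a b r (S i) (P i) /\
     (forall q, Ci a b r i q -> Ci a b r (S i) q -> dist_line u (P i) <= dist_line u q)) ->
  Un_cv (fun i => dist_line u (P i)) 0.
Proof.
  intros Hr [Hu0 _] [T [[HT [t [Ht0 ET]]] Huniq]] HP.
  destruct u as [u1 u2]. simpl in ET.
  assert (HN : 0 < u1^2 + u2^2).
  { destruct (Req_dec u1 0); destruct (Req_dec u2 0).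
    - subst. exfalso; apply Hu0; reflexivity.
    - nra. - nra. - nra. }
  assert (Hdpos : forall q, 0 <= dist_line (u1,u2) q).
  { intro q. unfold dist_line. apply Rmult_le_pos. apply Rabs_pos.
    left; apply Rinv_0_lt_compat, sqrt_lt_R0; simpl; lra. }
  subst T. unfold in_disk in HT; simpl in HT.
  assert (Hs : forall s, 0 <= s -> (s*u1 - a)^2 + (s*u2 - b)^2 <= r^2 -> s = t).
  { intros s Hs0 Hg.
    assert (E := Huniq (s*u1, s*u2) (conj Hg (ex_intro _ s (conj Hs0 eq_refl)))).
    injection E; intros E2 E1.
    destruct (Req_dec u1 0).
    - assert (u2 <> 0) by (intro; subst; lra).
      apply (Rmult_eq_reg_r u2); lra.
    - apply (Rmult_eq_reg_r u1); lra. }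
  set (D := u1 * (t*u1 - a) + u2 * (t*u2 - b)).
  destruct (Req_dec t 0) as [Ht|Ht].
  -
    subst t.
    assert (H0 : forall i, Ci a b r i (0,0)).
    { intro i. unfold Ci, in_disk; cbn [fst snd].
      assert (0 <= INR i) by apply pos_INR. nra. }
    intros eps Heps. exists 0%nat. intros i _.
    destruct (HP i (ex_intro _ (0,0) (conj (H0 i) (H0 (S i))))) as [_ [_ Hm]].
    specialize (Hm _ (H0 i) (H0 (S i))).
    assert (dist_line (u1,u2) (0,0) = 0).
    { unfold dist_line, det; simpl. replace (u1*0 - u2*0) with 0 by ring.
      rewrite Rabs_R0. unfold Rdiv. ring. }
    unfold R_dist. rewrite Rminus_0_r, Rabs_pos_eq by apply Hdpos.
    lra.
  - assert (Htp : 0 < t) by lra.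
    assert (HD : D = 0).
    { destruct (Req_dec D 0) as [|HDn]; [assumption|exfalso].
      set (N := u1^2 + u2^2) in *.
      assert (HaD : 0 < Rabs D) by (apply Rabs_pos_lt; exact HDn).
      set (k := Rmin (t / Rabs D) (/ N)).
      assert (Hk0 : 0 < k).
      { unfold k. apply Rmin_pos. apply Rdiv_lt_0_compat; lra. apply Rinv_0_lt_compat; lra. }
      assert (Hk1 : k * Rabs D <= t).
      { assert (k <= t / Rabs D) by apply Rmin_l.
        apply (Rmult_le_compat_r (Rabs D)) in H; [|lra].
        unfold Rdiv in H. rewrite Rmult_assoc, Rinv_l in H by lra. lra. }
      assert (Hk2 : k * N <= 1).
      { assert (k <= / N) by apply Rmin_r.
        apply (Rmult_le_compat_r N) in H; [|lra]. rewrite Rinv_l in H by lra. lra. }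
      assert (E := Hs (t - D*k)).
      assert (Hpos : 0 <= t - D*k).
      { pose proof (Rle_abs D). pose proof (Rle_abs (-D)). rewrite Rabs_Ropp in H0. nra. }
      assert (Hg : ((t - D*k)*u1 - a)^2 + ((t-D*k)*u2 - b)^2 <= r^2).
      { assert (Ex : ((t - D*k)*u1 - a)^2 + ((t-D*k)*u2 - b)^2
                 = (t*u1 - a)^2 + (t*u2-b)^2 - 2*D*D*k + N*D*D*k*k) by (unfold D, N; ring).
        rewrite Ex. assert (0 < D*D) by nra.
        assert (D*D*k*(k*N) <= D*D*k*1) by (apply Rmult_le_compat_l; [apply Rmult_le_pos; lra| lra]).
        assert (0 < D*D*k) by (apply Rmult_lt_0_compat; lra).
        lra. }
      specialize (E Hpos Hg). assert (D*k = 0) by lra.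
      apply Rmult_integral in H. destruct H; lra. }
    set (S0 := t^2 * (u1^2+u2^2)).
    assert (HS0 : 0 <= S0) by (unfold S0; nra).
    intros eps Heps.
    destruct (nat_big (S0/(4*r^2) + 1 + S0/(4*r*eps))) as [N0 HN0].
    exists N0. intros i Hi. specialize (HN0 i Hi).
    set (x := INR i) in *.
    assert (A1 : 0 <= S0/(4*r^2)) by (apply Rmult_le_pos; [lra| left; apply Rinv_0_lt_compat; nra]).
    assert (A2 : 0 <= S0/(4*r*eps)) by (apply Rmult_le_pos; [lra| left; apply Rinv_0_lt_compat; nra]).
    assert (Hx1 : 1 <= x) by lra.
    assert (Hx2 : S0 <= 4 * x^2 * r^2).
    { assert (E0 : S0/(4*r^2) * (4*r^2) = S0) by (field; lra).
      assert (Hr2 : 0 < 4*r^2) by nra.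
      assert (S0/(4*r^2) * (4*r^2) <= x * (4*r^2)) by (apply Rmult_le_compat_r; lra).
      assert (x * (4*r^2) <= x * x * (4*r^2)) by (apply Rmult_le_compat_r; nra).
      nra. }
    destruct (key a b r u1 u2 t i Hr HN HD HT Hx1 Hx2) as [q [Hq1 [Hq2 Hq3]]].
    destruct (HP i (ex_intro _ q (conj Hq1 Hq2))) as [_ [_ Hm]].
    specialize (Hm q Hq1 Hq2).
    unfold R_dist. rewrite Rminus_0_r, Rabs_pos_eq by apply Hdpos.
    fold S0 in Hq3. fold x in Hq3.
    assert (S0 / (4 * x * r) < eps).
    { apply (Rmult_lt_reg_r (4*x*r)). nra.
      unfold Rdiv. rewrite Rmult_assoc, Rinv_l, Rmult_1_r by nra.
      assert (S0/(4*r*eps) * (4*r*eps) = S0) by (field; lra).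
      assert (S0/(4*r*eps) * (4*r*eps) < x * (4*r*eps)) by (apply Rmult_lt_compat_r; nra).
      lra. }
    lra.
Qed.
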